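(* Let $S$ be the tree with five vertices consisting of a root vertex of valence $1$, above it a vertex of valence $3$, and above each of the three incoming edges of the latter a vertex of valence $1$ (each carrying one leaf). Let $R$ be the tree with five vertices consisting of a root vertex of valence $2$, and above each of its two incoming edges a linear chain of two vertices of valence $1$ (each chain ending in one leaf). Then for every $n\in\mathbb N$, $$sh(S,L_n)=sh(R,L_n)=\sum_{k=0}^n\binom{k+2}{2}^2,$$ although $S$ and $R$ are not isomorphic.
   Context: A tree is a finite connected graph without cycles whose external edges are open. One external edge is the root; the others are leaves. Each vertex has one outgoing edge (towards the root) and a strictly positive number (valence) of incoming edges. No planar structure. $L_n$ is the linear tree with $n$ vertices, all of valence $1$. Shuffle: for trees $S,T$ with root edges $r_S,r_T$, a shuffle is a tree $A$ with edges labelled by pairs $(s,t)\in E(S)\times E(T)$ such that: (1) the root of $A$ is labelled $(r_S,r_T)$; (2) the labelling restricts to a bijection from leaves of $A$ onto $\mathrm{Leaves}(S)\times\mathrm{Leaves}(T)$; (3) if an edge labelled $(s,t)$ is not a leaf, the incoming edges of the vertex of $A$ above it are labelled either exactly $(s_1,t),\dots,(s_m,t)$ for $s_1,\dots,s_m$ the edges immediately above $s$ in $S$, or exactly $(s,t_1),\dots,(s,t_n)$ for $t_1,\dots,t_n$ the edges immediately above $t$ in $T$. Shuffles are taken up to isomorphism of labelled trees; $sh(S,T)$ is their number. *)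

(* Defs.v *)
From mathcomp Require Import all_boot.
Set Implicit Arguments. Unset Strict Implicit. Unset Printing Implicit Defensive.

(* A (rooted, non-planar) tree is represented from its root edge:
   [Node cs] is an edge; if [cs = [::]] it is an open external edge (a leaf),
   otherwise there is a vertex above it whose incoming edges are the root
   edges of the subtrees in [cs] (valence = size cs > 0).
   The order of [cs] is irrelevant: isomorphism ([tiso]) ignores it. *)
Inductive tree := Node of seq tree.

Inductive tiso : tree -> tree -> Prop :=
| TIso cs ds : tiso_list cs ds -> tiso (Node cs) (Node ds)
with tiso_list : seq tree -> seq tree -> Prop :=
| TL_nil : tiso_list [::] [::]
| TL_cons c cs d ds1 ds2 :
    tiso c d -> tiso_list cs (ds1 ++ ds2) -> tiso_list (c :: cs) (ds1 ++ d :: ds2).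

(* Edges of a tree are addressed by paths from the root edge:
   [::] is the root edge, [rcons p i] is the i-th edge immediately above p. *)
Fixpoint sub (T : tree) (p : seq nat) : option tree :=
  match p with
  | [::] => Some T
  | i :: p' => let: Node cs := T in
               match drop i cs with c :: _ => sub c p' | [::] => None end
  end.

Definition is_edge (T : tree) (p : seq nat) : bool :=
  if sub T p is Some _ then true else false.

Definition is_leaf (T : tree) (p : seq nat) : bool :=
  if sub T p is Some (Node [::]) then true else false.

Definition children (T : tree) (p : seq nat) : seq (seq nat) :=
  if sub T p is Some (Node cs) then mkseq (fun i => rcons p i) (size cs) else [::].

Fixpoint L (n : nat) : tree :=
  if n is n'.+1 then Node [:: L n'] else Node [::].

(* Edge-labelled trees; labels are pairs (s,t) of edge addresses *)
Definition label := (seq nat * seq nat)%type.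
Inductive ltree := LNode of label & seq ltree.

Definition llab (A : ltree) : label := let: LNode l _ := A in l.

Fixpoint lleaves (A : ltree) : seq label :=
  let: LNode l cs := A in
  if cs is [::] then [:: l] else flatten (map lleaves cs).

Inductive liso : ltree -> ltree -> Prop :=
| LIso l cs ds : liso_list cs ds -> liso (LNode l cs) (LNode l ds)
with liso_list : seq ltree -> seq ltree -> Prop :=
| LL_nil : liso_list [::] [::]
| LL_cons c cs d ds1 ds2 :
    liso c d -> liso_list cs (ds1 ++ ds2) -> liso_list (c :: cs) (ds1 ++ d :: ds2).

Fixpoint shuf_ok (S T : tree) (A : ltree) : bool :=
  let: LNode (s, t) cs := A in
  if cs is [::] then true
  else (perm_eq (map llab cs) [seq (s', t) | s' <- children S s]
        || perm_eq (map llab cs) [seq (s, t') | t' <- children T t])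
       && all (shuf_ok S T) cs.

Definition is_shuffle (S T : tree) (A : ltree) : Prop :=
  [/\ llab A = ([::], [::]),
      uniq (lleaves A)
      & (forall x : label, (x \in lleaves A) = is_leaf S x.1 && is_leaf T x.2)]
  /\ shuf_ok S T A.

Definition sh_is (S T : tree) (N : nat) : Prop :=
  exists f : nat -> ltree,
    [/\ forall i, i < N -> is_shuffle S T (f i),
        forall i j, i < N -> j < N -> liso (f i) (f j) -> i = j
      & forall A, is_shuffle S T A -> exists2 i, i < N & liso A (f i)].

Definition treeS : tree :=
  Node [:: Node [:: Node [:: Node [::]]; Node [:: Node [::]]; Node [:: Node [::]]]].

Definition treeR : tree := Node [:: L 2; L 2].

(* Main.v *)
Require Import Defs.
From mathcomp Require Import all_boot.
From HB Require Import structures.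
From mathcomp Require Import zify.
Set Implicit Arguments. Unset Strict Implicit. Unset Printing Implicit Defensive.

Lemma tree_ind' (P : tree -> Prop)
  (H : forall cs, (forall i, i < size cs -> P (nth (Node [::]) cs i)) -> P (Node cs)) :
  forall t, P t.
Proof.
fix IH 1. move=> [cs]. apply: H. move: cs. fix IH2 1. move=> [|c cs] [|i] Hi.
- exfalso; move: Hi; rewrite ltn0; discriminate.
- exfalso; move: Hi; rewrite ltn0; discriminate.
- exact: (IH c).
- exact: (IH2 cs i Hi).
Qed.

Lemma ltree_ind' (P : ltree -> Prop)
  (H : forall l cs, (forall i, i < size cs -> P (nth (LNode ([::],[::]) [::]) cs i)) -> P (LNode l cs)) :
  forall t, P t.
Proof.
fix IH 1. move=> [l cs]. apply: H. move: cs. fix IH2 1. move=> [|c cs] [|i] Hi.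
- exfalso; move: Hi; rewrite ltn0; discriminate.
- exfalso; move: Hi; rewrite ltn0; discriminate.
- exact: (IH c).
- exact: (IH2 cs i Hi).
Qed.

Fixpoint enc (A : ltree) : GenTree.tree label :=
  let: LNode l cs := A in GenTree.Node 0 (GenTree.Leaf l :: map enc cs).
Fixpoint dec (t : GenTree.tree label) : option ltree :=
  match t with
  | GenTree.Node 0 (GenTree.Leaf l :: ts) => Some (LNode l (pmap dec ts))
  | _ => None end.
Lemma encK : pcancel enc dec.
Proof.
elim/ltree_ind' => l cs IH /=. congr (Some (LNode l _)).
elim: cs IH => [|c cs IHc] IH //=. rewrite (IH 0) //=. rewrite IHc // => i Hi.
exact: (IH i.+1).
Qed.
HB.instance Definition _ := Equality.copy ltree (pcan_type encK).

Fixpoint mapi {A B} (f : nat -> A -> B) (k : nat) (l : seq A) : seq B :=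
  if l is x :: l' then f k x :: mapi f k.+1 l' else [::].

Fixpoint prodl {A} (Ls : seq (seq A)) : seq (seq A) :=
  if Ls is L :: Ls' then [seq x :: y | x <- L, y <- prodl Ls'] else [:: [::]].

Fixpoint gen (σ : tree) (p : seq nat) {struct σ} : tree -> seq nat -> seq ltree :=
  fix genT (τ : tree) (q : seq nat) {struct τ} : seq ltree :=
  let: Node cs := σ in let: Node ds := τ in
  (if nilp cs && nilp ds then [:: LNode (p,q) [::]] else [::]) ++
  (if cs is [::] then [::] else
     [seq LNode (p,q) l | l <- prodl (mapi (fun i c => gen c (rcons p i) τ q) 0 cs)]) ++
  (if ds is [::] then [::] else
     [seq LNode (p,q) l | l <- prodl (mapi (fun j d => genT d (rcons q j)) 0 ds)]).

Fixpoint cnt (σ : tree) {struct σ} : tree -> nat :=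
  fix cntT (τ : tree) {struct τ} : nat :=
  let: Node cs := σ in let: Node ds := τ in
  (nilp cs && nilp ds) +
  (if cs is [::] then 0 else foldr (fun c acc => cnt c τ * acc) 1 cs) +
  (if ds is [::] then 0 else foldr (fun d acc => cntT d * acc) 1 ds).

Definition genS cs p τ q :=
  if cs is [::] then [::] else
     [seq LNode (p,q) l | l <- prodl (mapi (fun i c => gen c (rcons p i) τ q) 0 cs)].
Definition genT σ p ds q :=
  if ds is [::] then [::] else
     [seq LNode (p,q) l | l <- prodl (mapi (fun j d => gen σ p d (rcons q j)) 0 ds)].

Lemma genE cs p ds q : gen (Node cs) p (Node ds) q =
  (if nilp cs && nilp ds then [:: LNode (p,q) [::]] else [::]) ++
  genS cs p (Node ds) q ++ genT (Node cs) p ds q.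
Proof. by []. Qed.

Lemma cntE cs ds : cnt (Node cs) (Node ds) =
  (nilp cs && nilp ds) +
  (if cs is [::] then 0 else foldr (fun c acc => cnt c (Node ds) * acc) 1 cs) +
  (if ds is [::] then 0 else foldr (fun d acc => cnt (Node cs) d * acc) 1 ds).
Proof. by []. Qed.


Lemma size_mapi A B (f : nat -> A -> B) k l : size (mapi f k l) = size l.
Proof. by elim: l k => //= x l IH k; rewrite IH. Qed.

Lemma nth_mapi A B (f : nat -> A -> B) k l i d dl : i < size l ->
  nth d (mapi f k l) i = f (k + i) (nth dl l i).
Proof.
elim: l k i => //= x l IH k [|i] Hi /=; first by rewrite addn0.
by rewrite IH // addSnnS.
Qed.

Lemma prodlP (A : eqType) (Ls : seq (seq A)) xs dx :
  xs \in prodl Ls <-> size xs = size Ls /\ forall i, i < size Ls -> nth dx xs i \in nth [::] Ls i.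
Proof.
elim: Ls xs => [|L Ls IH] xs /=.
  rewrite inE; split; first by move/eqP->.
  by case: xs => [|x xs] //= [].
split.
  case/allpairsP=> -[x y] /= [Hx Hy ->] /=.
  case/IH: Hy => Hs Hn; split; first by rewrite Hs.
  by case=> [|i] //= Hi; apply: Hn.
case: xs => [|x xs] /=; first by case.
case=> -[Hs] Hn.
apply/allpairsP; exists (x, xs) => /=; split => //.
  exact: (Hn 0).
by apply/IH; split => // i Hi; apply: (Hn i.+1).
Qed.

Lemma uniq_prodl (A : eqType) (Ls : seq (seq A)) :
  (forall i, i < size Ls -> uniq (nth [::] Ls i)) -> uniq (prodl Ls).
Proof.
elim: Ls => [|L Ls IH] //= H.
apply: allpairs_uniq.
- exact: (H 0).
- by apply: IH => i Hi; apply: (H i.+1).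
- by move=> [x y] [x' y'] _ _ /= [-> ->].
Qed.

Lemma size_prodl A (Ls : seq (seq A)) :
  size (prodl Ls) = foldr (fun L acc => size L * acc) 1 Ls.
Proof. by elim: Ls => //= L Ls IH; rewrite size_allpairs IH. Qed.

Lemma choice_list T (d : T) (P : nat -> T -> Prop) n :
  (forall i, i < n -> exists y, P i y) ->
  exists ys, size ys = n /\ forall i, i < n -> P i (nth d ys i).
Proof.
elim: n => [|n IH] H; first by exists [::].
case: IH => [i Hi|ys [Hs Hn]]; first by apply: H; apply: ltnW.
case: (H n (ltnSn n)) => y Hy.
exists (rcons ys y); split; first by rewrite size_rcons Hs.
move=> i Hi; rewrite nth_rcons Hs.
case: ltnP => Hlt; first exact: Hn.
have/eqP -> : i == n by rewrite eqn_leq Hlt -ltnS Hi.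
by rewrite eqxx.
Qed.

Lemma perm_flatten2 (T : eqType) (a b : seq (seq T)) :
  size a = size b -> (forall i, i < size a -> perm_eq (nth [::] a i) (nth [::] b i)) ->
  perm_eq (flatten a) (flatten b).
Proof.
elim: a b => [|x a IH] [|y b] //= [Hs] H.
apply: perm_cat; first exact: (H 0).
by apply: IH => // i Hi; apply: (H i.+1).
Qed.

Lemma allpairs_flattenl (S T : Type) (ss : seq (seq S)) (t : seq T) :
  [seq (x, y) | x <- flatten ss, y <- t] = flatten [seq [seq (x, y) | x <- s, y <- t] | s <- ss].
Proof. by elim: ss => //= s ss IH; rewrite allpairs_cat IH. Qed.

Lemma perm_allpairs_flattenr (S T : eqType) (s : seq S) (ts : seq (seq T)) :
  perm_eq [seq (x, y) | x <- s, y <- flatten ts] (flatten [seq [seq (x, y) | x <- s, y <- t] | t <- ts]).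
Proof.
elim: ts => /= [|t ts IH]; first by elim: s.
by rewrite perm_allpairs_catr perm_cat2l.
Qed.

Definition dx := LNode ([::], [::]) [::].

Lemma liso_lab x y : liso x y -> llab x = llab y.
Proof. by case. Qed.

Lemma perm_mid (T : eqType) (x : T) s1 s2 : perm_eq (s1 ++ x :: s2) (x :: s1 ++ s2).
Proof. by rewrite (perm_catCA s1 [:: x] s2). Qed.

Lemma liso_list_perm xs ys : liso_list xs ys -> perm_eq (map llab xs) (map llab ys).
Proof.
elim=> //= c cs d ds1 ds2 Hcd _ IH.
rewrite map_cat /= (liso_lab Hcd) perm_sym (permPl (perm_mid _ _ _)) perm_cons perm_sym.
by rewrite -map_cat.
Qed.

Lemma liso_list_nth xs ys : liso_list xs ys -> map llab xs = map llab ys ->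
  uniq (map llab xs) -> forall i, i < size xs -> liso (nth dx xs i) (nth dx ys i).
Proof.
elim=> // c cs d ds1 ds2 Hcd _ IH.
case: ds1 IH => [|e ds1] IH /=.
  move=> [_ Hm] /andP[_ Hu] [|i] //= Hi.
  by apply: IH.
move=> [He Hm] /andP[Hn _]; exfalso; move/negP: Hn; apply.
rewrite Hm map_cat /= mem_cat inE -(liso_lab Hcd) He eqxx.
by rewrite orbT.
Qed.

Lemma liso_build xs ys : perm_eq (map llab xs) (map llab ys) -> uniq (map llab ys) ->
  (forall x y, x \in xs -> y \in ys -> llab x = llab y -> liso x y) -> liso_list xs ys.
Proof.
elim: xs ys => [|x xs IH] ys Hp Hu H.
  case: ys Hp Hu H => [|y ys] Hp _ _; first constructor.
  by move/perm_size: Hp.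
have: llab x \in map llab ys by rewrite -(perm_mem Hp) inE eqxx.
case/mapP=> y Hy Hxy.
case/splitPr: Hy Hp Hu H => ys1 ys2 Hp Hu H.
apply: LL_cons; first by apply: H; rewrite ?inE ?eqxx ?mem_cat ?inE ?eqxx ?orbT.
apply: IH.
- move: Hp; rewrite /= map_cat /= perm_sym (permPl (perm_mid _ _ _)) Hxy perm_cons perm_sym.
  by rewrite map_cat.
- by move: Hu; rewrite !map_cat /= (perm_uniq (perm_mid (llab y) (map llab ys1) (map llab ys2))) => /andP[].
- move=> x' y' Hx' Hy'; apply: H; first by rewrite inE Hx' orbT.
  by move: Hy'; rewrite !mem_cat inE => /orP[->|->]; rewrite ?orbT.
Qed.


Definition dt := Node [::].

Lemma all_flatten (T : Type) (a : pred T) ss : all a (flatten ss) = all (all a) ss.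
Proof. by elim: ss => //= s ss IH; rewrite all_cat IH. Qed.

Lemma map_mkseq' (T1 T2 : Type) (g : T1 -> T2) f n : map g (mkseq f n) = mkseq (fun i => g (f i)) n.
Proof. by rewrite /mkseq -map_comp. Qed.

Lemma uniq_map_eq (T1 T2 : eqType) (f : T1 -> T2) s x y :
  uniq (map f s) -> x \in s -> y \in s -> f x = f y -> x = y.
Proof.
elim: s => //= z s IH /andP[Hn Hu]; rewrite !inE => /orP[/eqP->|Hx] /orP[/eqP->|Hy] // E.
- by move/negP: Hn; case; rewrite E map_f.
- by move/negP: Hn; case; rewrite -E map_f.
- exact: IH.
Qed.

Lemma eq_mapi A B (f g : nat -> A -> B) k l : (forall i x, f i x = g i x) -> mapi f k l = mapi g k l.
Proof. by move=> H; elim: l k => //= x l IH k; rewrite H IH. Qed.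

Lemma map_mapi A B C (h : B -> C) (f : nat -> A -> B) k l :
  map h (mapi f k l) = mapi (fun i x => h (f i x)) k l.
Proof. by elim: l k => //= x l IH k; rewrite IH. Qed.

Lemma sub_cat (S : tree) p b : sub S (p ++ b) = if sub S p is Some t then sub t b else None.
Proof.
elim: p S => //= i p IH [cs].
by case: (drop i cs) => //= c _; apply: IH.
Qed.

Lemma sub_child S p cs i : sub S p = Some (Node cs) -> i < size cs ->
  sub S (rcons p i) = Some (nth dt cs i).
Proof. by move=> Hp Hi; rewrite -cats1 sub_cat Hp /= (drop_nth dt Hi). Qed.

Lemma childrenE S p cs : sub S p = Some (Node cs) -> children S p = mkseq (rcons p) (size cs).
Proof. by rewrite /children => ->. Qed.

Lemma is_leafE S p cs : sub S p = Some (Node cs) -> is_leaf S p = nilp cs.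
Proof. by rewrite /is_leaf => ->; case: cs. Qed.

Lemma is_leaf_cons cs i a : is_leaf (Node cs) (i :: a) = (i < size cs) && is_leaf (nth dt cs i) a.
Proof.
rewrite /is_leaf /=; case: ltnP => H.
  by rewrite (drop_nth dt H).
by rewrite drop_oversize.
Qed.

Fixpoint leaves0 (t : tree) : seq (seq nat) :=
  let: Node cs := t in
  if cs is [::] then [:: [::]] else flatten (mapi (fun i c => map (cons i) (leaves0 c)) 0 cs).

Lemma mem_cons_map (i k : nat) a (l : seq (seq nat)) : (i :: a \in map (cons k) l) = (i == k) && (a \in l).
Proof.
apply/mapP/andP => [[b Hb [-> ->]]|[/eqP -> Ha]] //.
by exists a.
Qed.

Lemma mem_flat (F : tree -> seq (seq nat)) cs k :
  ([::] \in flatten (mapi (fun j c => map (cons j) (F c)) k cs)) = false /\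
  forall i a, (i :: a \in flatten (mapi (fun j c => map (cons j) (F c)) k cs)) =
    [&& k <= i, i - k < size cs & a \in F (nth dt cs (i - k))].
Proof.
elim: cs k => [|c cs IH] k /=.
  by split => // i a; case: (k <= i).
have [IH1 IH2] := IH k.+1.
split.
  rewrite mem_cat IH1 orbF; apply/negP; by case/mapP.
move=> i a; rewrite mem_cat mem_cons_map IH2.
case: (ltngtP i k) => H.
- by [].
- have -> : i - k = (i - k.+1).+1 by lia.
  by [].
- by subst i; rewrite subnn /= orbF.
Qed.

Lemma leaves0_mem t a : (a \in leaves0 t) = is_leaf t a.
Proof.
elim/tree_ind': t a => cs IH a.
case: cs IH => [|c cs] IH.
  by rewrite /= inE; case: a => [|i a] //=.
have [H1 H2] := mem_flat leaves0 (c :: cs) 0.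
rewrite /leaves0 -/leaves0.
case: a => [|i a].
  by rewrite H1.
rewrite H2 is_leaf_cons subn0 leq0n /=.
case: ltnP => //= Hi.
by rewrite IH.
Qed.

Lemma uniq_flat (F : tree -> seq (seq nat)) cs k :
  (forall i, i < size cs -> uniq (F (nth dt cs i))) ->
  uniq (flatten (mapi (fun j c => map (cons j) (F c)) k cs)).
Proof.
elim: cs k => [|c cs IH] k H //=.
rewrite cat_uniq; apply/and3P; split.
- rewrite map_inj_uniq; last by move=> x y [].
  exact: (H 0).
- apply/hasPn => x Hx; have [H1 H2] := mem_flat F cs k.+1.
  case: x Hx => [|i a]; first by rewrite H1.
  rewrite H2 mem_cons_map => /and3P[Hk _ _].
  by apply/negP => /andP[/eqP Hik _]; lia.
- by apply: IH => i Hi; apply: (H i.+1).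
Qed.

Lemma leaves0_uniq t : uniq (leaves0 t).
Proof.
elim/tree_ind': t => cs IH.
case: cs IH => [|c cs] IH //.
rewrite /leaves0 -/leaves0.
exact: uniq_flat.
Qed.

Definition LSt (t : tree) (p : seq nat) := map (cat p) (leaves0 t).

Lemma LSt_node cs p : cs <> [::] ->
  LSt (Node cs) p = flatten (mapi (fun i c => LSt c (rcons p i)) 0 cs).
Proof.
case: cs => [|c cs] // _.
rewrite /LSt /leaves0 -/leaves0 map_flatten map_mapi.
congr flatten; apply: eq_mapi => i x.
by rewrite -map_comp; apply: eq_map => a /=; rewrite cat_rcons.
Qed.


Lemma gen_ind (P : tree -> tree -> Prop) :
  (forall cs ds, (forall i, i < size cs -> forall τ, P (nth dt cs i) τ) ->
     (forall j, j < size ds -> P (Node cs) (nth dt ds j)) -> P (Node cs) (Node ds)) ->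
  forall σ τ, P σ τ.
Proof.
move=> H; elim/tree_ind' => cs IHs; elim/tree_ind' => ds IHt.
by apply: H.
Qed.

Lemma genS_cons c cs p τ q : genS (c :: cs) p τ q =
  [seq LNode (p,q) l | l <- prodl (mapi (fun i c => gen c (rcons p i) τ q) 0 (c :: cs))].
Proof. by []. Qed.
Lemma genT_cons σ p d ds q : genT σ p (d :: ds) q =
  [seq LNode (p,q) l | l <- prodl (mapi (fun j d => gen σ p d (rcons q j)) 0 (d :: ds))].
Proof. by []. Qed.

Lemma genS_mem x cs p τ q : x \in genS cs p τ q ->
  cs <> [::] /\ exists xs, [/\ x = LNode (p, q) xs, size xs = size cs &
    forall i, i < size cs -> nth dx xs i \in gen (nth dt cs i) (rcons p i) τ q].
Proof.
case: cs => [|c cs] //; rewrite genS_cons => /mapP [xs Hxs ->]; split => //.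
have [Hs Hn] := (prodlP _ xs dx).1 Hxs; rewrite size_mapi in Hs Hn.
exists xs; split => // i Hi.
by have := Hn i Hi; rewrite (nth_mapi _ _ _ dt Hi).
Qed.

Lemma genS_in xs cs p τ q : cs <> [::] -> size xs = size cs ->
  (forall i, i < size cs -> nth dx xs i \in gen (nth dt cs i) (rcons p i) τ q) ->
  LNode (p, q) xs \in genS cs p τ q.
Proof.
case: cs => [|c cs] // _ Hs Hn; rewrite genS_cons; apply: map_f.
apply/(prodlP _ _ dx).2; rewrite size_mapi; split => // i Hi.
by rewrite (nth_mapi _ _ _ dt Hi); apply: Hn.
Qed.

Lemma genT_mem x σ p ds q : x \in genT σ p ds q ->
  ds <> [::] /\ exists xs, [/\ x = LNode (p, q) xs, size xs = size ds &
    forall i, i < size ds -> nth dx xs i \in gen σ p (nth dt ds i) (rcons q i)].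
Proof.
case: ds => [|d ds] //; rewrite genT_cons => /mapP [xs Hxs ->]; split => //.
have [Hs Hn] := (prodlP _ xs dx).1 Hxs; rewrite size_mapi in Hs Hn.
exists xs; split => // i Hi.
by have := Hn i Hi; rewrite (nth_mapi _ _ _ dt Hi).
Qed.

Lemma genT_in xs σ p ds q : ds <> [::] -> size xs = size ds ->
  (forall i, i < size ds -> nth dx xs i \in gen σ p (nth dt ds i) (rcons q i)) ->
  LNode (p, q) xs \in genT σ p ds q.
Proof.
case: ds => [|d ds] // _ Hs Hn; rewrite genT_cons; apply: map_f.
apply/(prodlP _ _ dx).2; rewrite size_mapi; split => // i Hi.
by rewrite (nth_mapi _ _ _ dt Hi); apply: Hn.
Qed.

Lemma gen_lab σ p τ q x : x \in gen σ p τ q -> llab x = (p, q).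
Proof.
case: σ τ => [cs] [ds]; rewrite genE !mem_cat => /or3P[H|H|H].
- by move: H; case: ifP => //; rewrite inE => _ /eqP ->.
- by case: (genS_mem H) => _ [xs [-> _ _]].
- by case: (genT_mem H) => _ [xs [-> _ _]].
Qed.

Lemma lab_mkseq xs n (g : nat -> label) : size xs = n ->
  (forall i, i < n -> llab (nth dx xs i) = g i) -> map llab xs = mkseq g n.
Proof.
move=> Hs Hn; apply: (eq_from_nth (x0 := ([::], [::]))); first by rewrite size_map size_mkseq.
by move=> i; rewrite size_map Hs => Hi; rewrite (nth_map dx) ?Hs // nth_mkseq // Hn.
Qed.

Lemma labS xs cs p τ q : size xs = size cs ->
  (forall i, i < size cs -> nth dx xs i \in gen (nth dt cs i) (rcons p i) τ q) ->
  map llab xs = mkseq (fun i => (rcons p i, q)) (size cs).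
Proof. by move=> Hs Hn; apply: lab_mkseq => // i Hi; apply: gen_lab (Hn i Hi). Qed.

Lemma labT xs σ p ds q : size xs = size ds ->
  (forall i, i < size ds -> nth dx xs i \in gen σ p (nth dt ds i) (rcons q i)) ->
  map llab xs = mkseq (fun i => (p, rcons q i)) (size ds).
Proof. by move=> Hs Hn; apply: lab_mkseq => // i Hi; apply: gen_lab (Hn i Hi). Qed.

Lemma uniqS (p q : seq nat) n : uniq (mkseq (fun i => (rcons p i, q) : label) n).
Proof. apply: mkseq_uniq => i j [H]; exact: (@rcons_injr nat p i j H). Qed.

Lemma uniqT (p q : seq nat) n : uniq (mkseq (fun i => (p, rcons q i) : label) n).
Proof. apply: mkseq_uniq => i j [H]; exact: (@rcons_injr nat q i j H). Qed.

Lemma noclash (p q : seq nat) i n : ((rcons p i, q) : label) \in mkseq (fun j => (p, rcons q j) : label) n = false.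
Proof.
apply/negP => /mapP [j _ [H _]].
by move/(congr1 size): H; rewrite size_rcons; lia.
Qed.

Lemma noclash' (p q : seq nat) i n : ((p, rcons q i) : label) \in mkseq (fun j => (rcons p j, q) : label) n = false.
Proof.
apply/negP => /mapP [j _ [H _]].
by move/(congr1 size): H; rewrite size_rcons; lia.
Qed.

Lemma shuf_okE S T s t cs : shuf_ok S T (LNode (s, t) cs) = nilp cs ||
  ((perm_eq (map llab cs) [seq (s', t) | s' <- children S s]
    || perm_eq (map llab cs) [seq (s, t') | t' <- children T t]) && all (shuf_ok S T) cs).
Proof. by case: cs. Qed.


Lemma size_gt0 (A : Type) (s : seq A) : s <> [::] -> 0 < size s.
Proof. by case: s. Qed.

Lemma lleaves_node l xs : xs != [::] -> lleaves (LNode l xs) = flatten (map lleaves xs).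
Proof. by case: xs. Qed.

Lemma liso_inv l l' xs ys : liso (LNode l xs) (LNode l' ys) -> liso_list xs ys.
Proof. by move=> H; inversion H. Qed.

Lemma mem_mkseq_i (A : eqType) (f : nat -> A) n i : i < n -> f i \in mkseq f n.
Proof. by move=> Hi; rewrite /mkseq; apply: map_f; rewrite mem_iota. Qed.

Lemma gen_leaves σ τ : forall p q x, x \in gen σ p τ q ->
  perm_eq (lleaves x) [seq (a, b) | a <- LSt σ p, b <- LSt τ q].
Proof.
move: σ τ; apply: gen_ind => cs ds IHs IHt p q x.
rewrite genE !mem_cat => /or3P[H|H|H].
- move: H; case: ifP => // /andP[/nilP Ec /nilP Ed]; clear IHs IHt; subst cs ds.
  by rewrite inE => /eqP ->; rewrite /LSt /= !cats0.
- case: (genS_mem H) => Hcs [xs [-> Hs Hn]].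
  have Hne : xs != [::] by apply/eqP => E; apply: Hcs; apply/size0nil; rewrite -Hs E.
  rewrite lleaves_node // (LSt_node p Hcs) allpairs_flattenl.
  apply: perm_flatten2; first by rewrite !size_map size_mapi.
  move=> i; rewrite size_map Hs => Hi.
  rewrite (nth_map dx) ?Hs // (nth_map [::]) ?size_mapi // (nth_mapi _ _ _ dt Hi) /=.
  exact: IHs i Hi _ _ _ _ (Hn i Hi).
- case: (genT_mem H) => Hds [xs [-> Hs Hn]].
  have Hne : xs != [::] by apply/eqP => E; apply: Hds; apply/size0nil; rewrite -Hs E.
  rewrite lleaves_node // (LSt_node q Hds).
  rewrite perm_sym (permPl (perm_allpairs_flattenr _ _)) perm_sym.
  apply: perm_flatten2; first by rewrite !size_map size_mapi.
  move=> i; rewrite size_map Hs => Hi.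
  rewrite (nth_map dx) ?Hs // (nth_map [::]) ?size_mapi // (nth_mapi _ _ _ dt Hi) /=.
  exact: IHt i Hi _ _ _ (Hn i Hi).
Qed.

Lemma gen_uniq σ τ : forall p q, uniq (gen σ p τ q).
Proof.
move: σ τ; apply: gen_ind => cs ds IHs IHt p q.
have U1 : uniq (genS cs p (Node ds) q).
  case: cs IHs IHt => [|c cs] IHs IHt //; rewrite genS_cons map_inj_uniq; last by move=> a b [].
  apply: uniq_prodl => i; rewrite size_mapi => Hi; rewrite (nth_mapi _ _ _ dt Hi).
  exact: IHs.
have U2 : uniq (genT (Node cs) p ds q).
  clear U1; case: ds IHt => [|d ds] IHt //; rewrite genT_cons map_inj_uniq; last by move=> a b [].
  apply: uniq_prodl => i; rewrite size_mapi => Hi; rewrite (nth_mapi _ _ _ dt Hi).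
  exact: IHt.
have D : ~~ has (mem (genS cs p (Node ds) q)) (genT (Node cs) p ds q).
  apply/hasPn => y Hy; apply/negP => Hy'.
  case: (genT_mem Hy) => Hds [ys [Ey Hs Hn]].
  case: (genS_mem Hy') => Hcs [xs [Ex Hs' Hn']].
  rewrite Ex in Ey; case: Ey => Exy; subst ys.
  have : (rcons p 0, q) \in map llab xs.
    by rewrite (labS Hs' Hn') mem_mkseq_i // size_gt0.
  by rewrite (labT Hs Hn) noclash.
case: (boolP (nilp cs && nilp ds)) => [/andP[/nilP Ec /nilP Ed]|Hnil].
  by clear IHs IHt; subst cs ds.
by rewrite genE (negbTE Hnil) cat0s cat_uniq U1 U2 D.
Qed.

Lemma gen_liso σ τ : forall p q x y, x \in gen σ p τ q -> y \in gen σ p τ q -> liso x y -> x = y.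
Proof.
move: σ τ; apply: gen_ind => cs ds IHs IHt p q x y.
case: (boolP (nilp cs && nilp ds)) => [/andP[/nilP Ec /nilP Ed]|Hnil].
  by clear IHs IHt; subst cs ds; rewrite genE /= !inE => /eqP -> /eqP ->.
rewrite genE (negbTE Hnil) cat0s !mem_cat => /orP[Hx|Hx] /orP[Hy|Hy] HL.
- case: (genS_mem Hx) => Hcs [xs [Ex Hs Hn]].
  case: (genS_mem Hy) => _ [ys [Ey Hs' Hn']].
  subst x y; have HLL := liso_inv HL.
  have Lm : map llab xs = map llab ys by rewrite (labS Hs Hn) (labS Hs' Hn').
  have Hu : uniq (map llab xs) by rewrite (labS Hs Hn) uniqS.
  congr LNode; apply: (eq_from_nth (x0 := dx)); first by rewrite Hs Hs'.
  move=> i Hi; have Hi' := Hi; rewrite Hs in Hi'.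
  exact: (IHs i Hi' _ _ _ _ _ (Hn i Hi') (Hn' i Hi') (liso_list_nth HLL Lm Hu Hi)).
- case: (genS_mem Hx) => Hcs [xs [Ex Hs Hn]].
  case: (genT_mem Hy) => _ [ys [Ey Hs' Hn']].
  subst x y; have HP := liso_list_perm (liso_inv HL).
  have : (rcons p 0, q) \in map llab xs.
    by rewrite (labS Hs Hn) mem_mkseq_i // size_gt0.
  by rewrite (perm_mem HP) (labT Hs' Hn') noclash.
- case: (genT_mem Hx) => Hds [xs [Ex Hs Hn]].
  case: (genS_mem Hy) => _ [ys [Ey Hs' Hn']].
  subst x y; have HP := liso_list_perm (liso_inv HL).
  have : (p, rcons q 0) \in map llab xs.
    by rewrite (labT Hs Hn) mem_mkseq_i // size_gt0.
  by rewrite (perm_mem HP) (labS Hs' Hn') noclash'.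
- case: (genT_mem Hx) => Hds [xs [Ex Hs Hn]].
  case: (genT_mem Hy) => _ [ys [Ey Hs' Hn']].
  subst x y; have HLL := liso_inv HL.
  have Lm : map llab xs = map llab ys by rewrite (labT Hs Hn) (labT Hs' Hn').
  have Hu : uniq (map llab xs) by rewrite (labT Hs Hn) uniqT.
  congr LNode; apply: (eq_from_nth (x0 := dx)); first by rewrite Hs Hs'.
  move=> i Hi; have Hi' := Hi; rewrite Hs in Hi'.
  exact: (IHt i Hi' _ _ _ _ (Hn i Hi') (Hn' i Hi') (liso_list_nth HLL Lm Hu Hi)).
Qed.

Lemma foldr_mapi_size (G : nat -> tree -> seq ltree) (h : tree -> nat) cs k :
  (forall i, i < size cs -> size (G (k + i) (nth dt cs i)) = h (nth dt cs i)) ->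
  foldr (fun L acc => size L * acc) 1 (mapi G k cs) = foldr (fun c acc => h c * acc) 1 cs.
Proof.
elim: cs k => //= c cs IH k H.
rewrite -(H 0) // addn0 IH // => i Hi.
by rewrite addSnnS; exact: (H i.+1).
Qed.

Lemma gen_size σ τ : forall p q, size (gen σ p τ q) = cnt σ τ.
Proof.
move: σ τ; apply: gen_ind => cs ds IHs IHt p q.
rewrite genE cntE !size_cat addnA.
congr (_ + _ + _).
- by case: (nilp cs && nilp ds).
- case: cs IHs IHt => [|c cs] IHs IHt //.
  rewrite genS_cons size_map size_prodl.
  by apply: foldr_mapi_size => i Hi; rewrite add0n IHs.
- case: ds IHt => [|d ds] IHt //.
  rewrite genT_cons size_map size_prodl.
  by apply: foldr_mapi_size => i Hi; rewrite add0n IHt.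
Qed.

Section Gen.
Variables S T : tree.

Lemma gen_shuf_ok σ τ : forall p q, sub S p = Some σ -> sub T q = Some τ ->
  forall x, x \in gen σ p τ q -> shuf_ok S T x.
Proof.
move: σ τ; apply: gen_ind => cs ds IHs IHt p q Hp Hq x.
rewrite genE !mem_cat => /or3P[H|H|H].
- by move: H; case: ifP => //; rewrite inE => _ /eqP ->.
- case: (genS_mem H) => _ [xs [-> Hs Hn]].
  rewrite shuf_okE (childrenE Hp) (labS Hs Hn) map_mkseq' perm_refl /=; apply/orP; right.
  apply/(all_nthP dx) => i Hi; rewrite Hs in Hi.
  exact: (IHs i Hi _ _ _ (sub_child Hp Hi) Hq _ (Hn i Hi)).
- case: (genT_mem H) => _ [xs [-> Hs Hn]].
  rewrite shuf_okE (childrenE Hq) (labT Hs Hn) map_mkseq' perm_refl /= orbT /=; apply/orP; right.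
  apply/(all_nthP dx) => i Hi; rewrite Hs in Hi.
  exact: (IHt i Hi _ _ Hp (sub_child Hq Hi) _ (Hn i Hi)).
Qed.

End Gen.


Lemma genS_sub x cs p ds q : x \in genS cs p (Node ds) q -> x \in gen (Node cs) p (Node ds) q.
Proof. by move=> H; rewrite genE !mem_cat H orbT. Qed.
Lemma genT_sub x cs p ds q : x \in genT (Node cs) p ds q -> x \in gen (Node cs) p (Node ds) q.
Proof. by move=> H; rewrite genE !mem_cat H !orbT. Qed.

Section Compl.
Variables S T : tree.
Definition lp (x : label) := is_leaf S x.1 && is_leaf T x.2.

Lemma gen_complete σ τ : forall p q A, llab A = (p, q) -> sub S p = Some σ -> sub T q = Some τ ->
  shuf_ok S T A -> all lp (lleaves A) -> exists2 g, g \in gen σ p τ q & liso A g.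
Proof.
move: σ τ; apply: gen_ind => cs ds IHs IHt p q [l xs] El Hp Hq; rewrite /= in El; subst l.
have [->|Hne] := eqVneq xs [::].
  move=> _ /= /andP[/andP[Lp Lq] _].
  rewrite (is_leafE Hp) in Lp; rewrite (is_leafE Hq) in Lq.
  move/nilP: Lp => Ec; move/nilP: Lq => Ed; clear IHs IHt; subst cs ds.
  exists (LNode (p, q) [::]); first by rewrite /=; apply: mem_head.
  by constructor; constructor.
rewrite shuf_okE lleaves_node // (_ : nilp xs = false) /=; last by case: xs Hne.
rewrite all_flatten all_map => /andP[/orP[HP|HP] Hall] Hlv.
- rewrite (childrenE Hp) map_mkseq' in HP.
  have Hcs : cs <> [::].
    move=> E; move: HP; rewrite E /= => /perm_size; rewrite size_map => /size0nil Ex.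
    by rewrite Ex eqxx in Hne.
  have Hu : uniq (map llab xs) by rewrite (perm_uniq HP) uniqS.
  have Hex : forall i, i < size cs -> exists y,
      y \in gen (nth dt cs i) (rcons p i) (Node ds) q /\
      exists2 x, x \in xs & (llab x = (rcons p i, q) /\ liso x y).
    move=> i Hi.
    have : (rcons p i, q) \in map llab xs by rewrite (perm_mem HP) mem_mkseq_i.
    case/mapP => x Hx Ex.
    have [g Hg Hl] := IHs i Hi (Node ds) (rcons p i) q x (esym Ex) (sub_child Hp Hi) Hq
                       (allP Hall x Hx) (allP Hlv x Hx).
    by exists g; split => //; exists x => //; split => //; rewrite Ex.
  have [ys [Hys Hyn]] := choice_list dx Hex.
  have Hlab : map llab ys = mkseq (fun i => (rcons p i, q)) (size cs).
    by apply: labS => // i Hi; exact: (Hyn i Hi).1.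
  apply: (@ex_intro2 _ _ _ (LNode (p, q) ys)).
    by apply: genS_sub; apply: genS_in => // i Hi; exact: (Hyn i Hi).1.
  constructor; apply: liso_build.
  + by rewrite Hlab.
  + by rewrite Hlab uniqS.
  + move=> x y Hx Hy Exy.
    case/(nthP dx): Hy => i Hi Ei; rewrite Hys in Hi.
    case: (Hyn i Hi) => Hg [x' Hx' [Ex' Hl']].
    rewrite -Ei; have -> // : x = x'.
    apply: (uniq_map_eq Hu Hx Hx').
    by rewrite Exy Ex' -Ei (gen_lab Hg).
- rewrite (childrenE Hq) map_mkseq' in HP.
  have Hds : ds <> [::].
    move=> E; move: HP; rewrite E /= => /perm_size; rewrite size_map => /size0nil Ex.
    by rewrite Ex eqxx in Hne.
  have Hu : uniq (map llab xs) by rewrite (perm_uniq HP) uniqT.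
  have Hex : forall i, i < size ds -> exists y,
      y \in gen (Node cs) p (nth dt ds i) (rcons q i) /\
      exists2 x, x \in xs & (llab x = (p, rcons q i) /\ liso x y).
    move=> i Hi.
    have : (p, rcons q i) \in map llab xs by rewrite (perm_mem HP) mem_mkseq_i.
    case/mapP => x Hx Ex.
    have [g Hg Hl] := IHt i Hi p (rcons q i) x (esym Ex) Hp (sub_child Hq Hi)
                       (allP Hall x Hx) (allP Hlv x Hx).
    by exists g; split => //; exists x => //; split => //; rewrite Ex.
  have [ys [Hys Hyn]] := choice_list dx Hex.
  have Hlab : map llab ys = mkseq (fun i => (p, rcons q i)) (size ds).
    by apply: labT => // i Hi; exact: (Hyn i Hi).1.
  apply: (@ex_intro2 _ _ _ (LNode (p, q) ys)).
    by apply: genT_sub; apply: genT_in => // i Hi; exact: (Hyn i Hi).1.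
  constructor; apply: liso_build.
  + by rewrite Hlab.
  + by rewrite Hlab uniqT.
  + move=> x y Hx Hy Exy.
    case/(nthP dx): Hy => i Hi Ei; rewrite Hys in Hi.
    case: (Hyn i Hi) => Hg [x' Hx' [Ex' Hl']].
    rewrite -Ei; have -> // : x = x'.
    apply: (uniq_map_eq Hu Hx Hx').
    by rewrite Exy Ex' -Ei (gen_lab Hg).
Qed.

End Compl.

Theorem sh_gen S T : sh_is S T (cnt S T).
Proof.
set G := gen S [::] T [::].
have HG : size G = cnt S T by rewrite gen_size.
exists (nth dx G); split.
- move=> i Hi; rewrite -HG in Hi.
  have Hx : nth dx G i \in G by rewrite mem_nth.
  split; last exact: (@gen_shuf_ok S T S T [::] [::] (erefl _) (erefl _) _ Hx).
  split.
  + exact: gen_lab Hx.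
  + rewrite (perm_uniq (gen_leaves Hx)); apply: allpairs_uniq.
    * by rewrite /LSt map_inj_uniq ?leaves0_uniq.
    * by rewrite /LSt map_inj_uniq ?leaves0_uniq.
    * by move=> [a b] [c d] _ _ /= [-> ->].
  + move=> x; rewrite (perm_mem (gen_leaves Hx)).
    apply/allpairsP/andP => [[[a b]] /= [Ha Hb ->]|[Ha Hb]].
      by move: Ha Hb; rewrite /LSt !map_id !leaves0_mem.
    by exists x; rewrite /LSt !map_id !leaves0_mem; case: x Ha Hb.
- move=> i j Hi Hj Hl; rewrite -HG in Hi Hj.
  have E := gen_liso (mem_nth dx Hi) (mem_nth dx Hj) Hl.
  apply/eqP; rewrite -(nth_uniq dx Hi Hj (gen_uniq S T [::] [::])); exact/eqP.
- move=> A [[HA Hu Hm] Hok].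
  have Hall : all (lp S T) (lleaves A) by apply/allP => x; rewrite Hm.
  have [g Hg Hl] := gen_complete HA (erefl _) (erefl _) Hok Hall.
  apply: (@ex_intro2 _ _ _ (index g G)); first by rewrite -HG index_mem.
  by rewrite nth_index.
Qed.


Lemma cnt_stepT cs d : cnt (Node cs) (Node [:: d]) =
  (if cs is [::] then 0 else foldr (fun c acc => cnt c (Node [:: d]) * acc) 1 cs) + cnt (Node cs) d.
Proof. by rewrite cntE andbF /= muln1. Qed.

Lemma cnt_L0 c cs : cnt (Node (c :: cs)) (L 0) = foldr (fun c acc => cnt c (L 0) * acc) 1 (c :: cs).
Proof. by rewrite cntE /= addn0. Qed.

Lemma LS m : L m.+1 = Node [:: L m]. Proof. by []. Qed.
Lemma L0 : L 0 = Node [::]. Proof. by []. Qed.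

Lemma cnt_Ls c d : cnt (Node [:: c]) (Node [:: d]) = cnt c (Node [:: d]) + cnt (Node [:: c]) d.
Proof. by rewrite cntE /= !muln1. Qed.

Lemma cnt_LL a m : cnt (L a) (L m) = 'C(a + m, a).
Proof.
elim: a m => [|a IHa] m.
  elim: m => [|m IHm] //.
  by rewrite LS L0 cnt_stepT -L0 IHm !bin0.
elim: m => [|m IHm].
  rewrite addn0 binn LS cnt_L0 [foldr _ _ _]/= muln1 (IHa 0) addn0 binn.
  by [].
rewrite [L a.+1]LS [L m.+1]LS cnt_Ls -!LS IHa IHm.
by rewrite addSn addnS binS addnC addSn addnS.
Qed.

Lemma bin2_2 m : 'C(m.+2, 2) * 2 = m.+2 * m.+1.
Proof.
elim: m => [|m IH] //.
rewrite binS bin1 mulnDl IH; lia.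
Qed.

Lemma cnt3 a d : cnt (Node [:: a; a; a]) (Node [:: d]) = cnt a (Node [:: d]) ^ 3 + cnt (Node [:: a; a; a]) d.
Proof.
have -> : cnt (Node [:: a; a; a]) (Node [:: d]) = 0 + cnt a (Node [:: d]) * (cnt a (Node [:: d]) * (cnt a (Node [:: d]) * 1)) + cnt (Node [:: a; a; a]) d * 1 by [].
by rewrite add0n !muln1 !expnS expn0 muln1.
Qed.
Lemma cnt2 a d : cnt (Node [:: a; a]) (Node [:: d]) = cnt a (Node [:: d]) ^ 2 + cnt (Node [:: a; a]) d.
Proof.
have -> : cnt (Node [:: a; a]) (Node [:: d]) = 0 + cnt a (Node [:: d]) * (cnt a (Node [:: d]) * 1) + cnt (Node [:: a; a]) d * 1 by [].
by rewrite add0n !muln1 !expnS expn0 muln1.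
Qed.
Lemma cnt30 a : cnt (Node [:: a; a; a]) (Node [::]) = cnt a (Node [::]) ^ 3.
Proof.
have -> : cnt (Node [:: a; a; a]) (Node [::]) = 0 + cnt a (Node [::]) * (cnt a (Node [::]) * (cnt a (Node [::]) * 1)) + 0 by [].
by rewrite add0n addn0 !muln1 !expnS expn0 muln1.
Qed.
Lemma cnt20 a : cnt (Node [:: a; a]) (Node [::]) = cnt a (Node [::]) ^ 2.
Proof.
have -> : cnt (Node [:: a; a]) (Node [::]) = 0 + cnt a (Node [::]) * (cnt a (Node [::]) * 1) + 0 by [].
by rewrite add0n addn0 !muln1 !expnS expn0 muln1.
Qed.
Lemma cnt10 a : cnt (Node [:: a]) (Node [::]) = cnt a (Node [::]).
Proof.
have -> : cnt (Node [:: a]) (Node [::]) = 0 + cnt a (Node [::]) * 1 + 0 by [].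
by rewrite add0n addn0 muln1.
Qed.

Definition Y := Node [:: L 1; L 1; L 1].

Lemma cnt_Y m : cnt Y (L m) = 'C(m.+2, 2) ^ 2.
Proof.
elim: m => [|m IH].
  by rewrite /Y L0 cnt30 -L0 cnt_LL.
rewrite /Y [L m.+1]LS cnt3 -LS IH cnt_LL.
rewrite add1n bin1 [in RHS]binS bin1.
have := bin2_2 m; move: ('C(m.+2, 2)) => c; nia.
Qed.

Lemma cnt_S n : cnt treeS (L n) = \sum_(k < n.+1) 'C(k.+2, 2) ^ 2.
Proof.
have ->: treeS = Node [:: Y] by [].
elim: n => [|n IH].
  by rewrite big_ord1 L0 cnt10 -L0 cnt_Y.
rewrite big_ord_recr -IH [L n.+1]LS cnt_Ls -LS cnt_Y addnC.
by [].
Qed.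

Lemma cnt_R n : cnt treeR (L n) = \sum_(k < n.+1) 'C(k.+2, 2) ^ 2.
Proof.
rewrite /treeR.
elim: n => [|n IH].
  by rewrite big_ord1 L0 cnt20 -L0 cnt_LL.
rewrite big_ord_recr -IH [L n.+1]LS cnt2 -LS cnt_LL addnC.
by [].
Qed.


Lemma tiso_list_size cs ds : tiso_list cs ds -> size cs = size ds.
Proof. by elim => //= c cs' d ds1 ds2 _ _ IH; rewrite size_cat /= IH size_cat addnS. Qed.

Lemma not_iso : ~ tiso treeS treeR.
Proof.
move=> H; inversion H as [cs ds HL E1 E2].
by have := tiso_list_size HL.
Qed.

Theorem mainTheorem7 :
  (forall n : nat,
     sh_is treeS (L n) (\sum_(k < n.+1) 'C(k.+2, 2) ^ 2) /\
     sh_is treeR (L n) (\sum_(k < n.+1) 'C(k.+2, 2) ^ 2)) /\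
  ~ tiso treeS treeR.
Proof.
split; last exact: not_iso.
move=> n; split.
- rewrite -cnt_S; exact: sh_gen.
- rewrite -cnt_R; exact: sh_gen.
Qed.
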